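(* Let $\alpha\in(0,1]$, $\Theta\in[0,1]$, $\delta_t>0$ and $Q>0$ be given, and define the matrices $$A=\begin{bmatrix}1&0\\ \alpha&0\end{bmatrix},\quad B=-D=\begin{bmatrix}\delta_t&-\delta_t&0&0&0\\ 0&0&\delta_t&-\delta_t&0\end{bmatrix},\quad C=\begin{bmatrix}0&1\end{bmatrix},\quad E=\begin{bmatrix}0&0&0&0&1\end{bmatrix}.$$ Consider the ramp queue system $$x(t+1)=(A+\Delta A(t))x(t)+B\tilde f(t)+Dw(t),\qquad y(t)=Cx(t)+Ew(t),\qquad t=0,1,2,\dots,$$ where $x(t)\in[0,Q]^2$, $\tilde f(t)\in\mathbb{R}^4$ is a known input, $w(t)\in\mathbb{R}^5$ is an unknown noise, and $\Delta A(t)=\begin{bmatrix}0&0\\ \theta(t)&0\end{bmatrix}$ with $\theta(t)$ unknown and $\sup_{t\ge0}|\theta(t)|\le\Theta$. Consider the filter $$\hat x(t+1)=A\hat x(t)+B\tilde f(t)+L\big(y(t)-\hat y(t)\big),\qquad \hat y(t)=C\hat x(t),$$ with initial condition $\hat x(0)\in[0,Q]^2$ and gain $L\in\mathbb{R}^{2\times 1}$, and let $e(t)=x(t)-\hat x(t)$. Suppose there exist a symmetric positive definite matrix $P\in\mathbb{R}^{2\times2}$, a vector $R\in\mathbb{R}^{2}$ and scalars $\mu_1,\mu_2,\mu_3>0$ such that $$\begin{bmatrix} -\mu_3 I & \Theta P & 0 & 0 & 0\\ \Theta P & -P & PA-RC & 0 & PD-RE\\ 0 & (PA-RC)^{\mathrm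 T} & -P+I & 0 & 0\\ 0 & 0 & 0 & (\mu_3-\mu_1)I & 0\\ 0 & (PD-RE)^{\mathrm T} & 0 & 0 & -\mu_2 I \end{bmatrix}\prec 0,$$ where the first four diagonal blocks are $2\times 2$ and the last is $5\times5$. Then, with the filter gain $L=P^{-1}R$, there exists a positive definite function $\gamma$ of $(x(0),\hat x(0))\in[0,Q]^2\times[0,Q]^2$ with values in $\mathbb{R}_{\ge0}$ such that $$\sum_{t=0}^T\|e(t)\|_2^2\le \mu_1\sum_{t=0}^T\|x(t)\|_2^2+\mu_2\sum_{t=0}^T\|w(t)\|_2^2+\gamma(x(0),\hat x(0)),\qquad T=0,1,2,\dots,$$ for any initial conditions $x(0),\hat x(0)\in[0,Q]^2$, any input $\tilde f$, any noise $w$ and any uncertainty $\theta$ with $\sup_{t\ge0}|\theta(t)|\le\Theta$.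
   Context: Model interpretation: $x(t)=(x_{\mathrm{all}}(t),x_{\mathrm{cv}}(t))^{\mathrm T}$ is the number of all vehicles and of connected vehicles queued on a freeway on-ramp (bounded by the maximum queue length $Q$), $\alpha+\theta(t)$ is the connected-vehicle penetration rate, $\delta_t$ is the metering cycle length, $\tilde f(t)$ are measured in/out flows, and $y(t)$ is the measured connected-vehicle count. $\|\cdot\|_2$ is the Euclidean norm; $X\prec0$ means $X$ is symmetric negative definite; $I$ denotes an identity matrix of the appropriate size. *)

(* Defs.v *)
From mathcomp Require Import all_boot all_order all_algebra.
Set Implicit Arguments. Unset Strict Implicit. Unset Printing Implicit Defensive.
Import Order.TTheory GRing.Theory Num.Theory.
Local Open Scope ring_scope.

Section Defs.
Variable R : realFieldType.

Definition Amx (alpha : R) : 'M[R]_2 :=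
  \matrix_(i < 2, j < 2)
    if (i == 0 :> nat) then (if (j == 0 :> nat) then 1 else 0)
    else (if (j == 0 :> nat) then alpha else 0).

Definition DeltaA (th : R) : 'M[R]_2 :=
  \matrix_(i < 2, j < 2)
    if (i == 1 :> nat) && (j == 0 :> nat) then th else 0.

Definition Bmx (dt : R) : 'M[R]_(2, 4) :=
  \matrix_(i < 2, j < 4)
    if (i == 0 :> nat) then
      (if (j == 0 :> nat) then dt else if (j == 1 :> nat) then - dt else 0)
    else
      (if (j == 2 :> nat) then dt else if (j == 3 :> nat) then - dt else 0).

(* D = -[B | 0] (2 x 5) = [[-dt,dt,0,0,0],[0,0,-dt,dt,0]] *)
Definition Dmx (dt : R) : 'M[R]_(2, 5) :=
  \matrix_(i < 2, j < 5)
    if (i == 0 :> nat) then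
      (if (j == 0 :> nat) then - dt else if (j == 1 :> nat) then dt else 0)
    else
      (if (j == 2 :> nat) then - dt else if (j == 3 :> nat) then dt else 0).

Definition Cmx : 'M[R]_(1, 2) :=
  \matrix_(i < 1, j < 2) if (j == 1 :> nat) then 1 else 0.

Definition Emx : 'M[R]_(1, 5) :=
  \matrix_(i < 1, j < 5) if (j == 4 :> nat) then 1 else 0.

Definition posdef (n : nat) (M : 'M[R]_n) : Prop :=
  M^T = M /\ forall v : 'cV[R]_n, v != 0 -> 0 < (v^T *m M *m v) 0 0.
Definition negdef (n : nat) (M : 'M[R]_n) : Prop :=
  M^T = M /\ forall v : 'cV[R]_n, v != 0 -> (v^T *m M *m v) 0 0 < 0.

Definition sqnorm (n : nat) (v : 'cV[R]_n) : R := \sum_(i < n) (v i 0) ^+ 2.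

Definition inbox (Q : R) (n : nat) (v : 'cV[R]_n) : Prop :=
  forall i : 'I_n, 0 <= v i 0 <= Q.

Definition LMI (Theta mu1 mu2 mu3 : R) (P : 'M[R]_2) (Rv : 'cV[R]_2)
    (A : 'M[R]_2) (C : 'M[R]_(1,2)) (D : 'M[R]_(2,5)) (E : 'M[R]_(1,5))
    : 'M[R]_(2 + (2 + (2 + (2 + 5)))) :=
  let PA := P *m A - Rv *m C in
  let PD := P *m D - Rv *m E in
  block_mx (- mu3%:M) (row_mx (Theta *: P) 0)
    (col_mx (Theta *: P) 0)
    (block_mx (- P) (row_mx PA (row_mx 0 PD))
      (col_mx PA^T (col_mx 0 PD^T))
      (block_mx (1%:M - P) (row_mx 0 0)
        (col_mx 0 0)
        (block_mx ((mu3 - mu1)%:M) 0 0 (- mu2%:M)))).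

End Defs.

(* Main.v *)
Require Import Defs.
From mathcomp Require Import all_boot all_order all_algebra.
From mathcomp Require Import ring lra.
Import Order.TTheory GRing.Theory Num.Theory.
Local Open Scope ring_scope.
Set Implicit Arguments. Unset Strict Implicit. Unset Printing Implicit Defensive.
Local Open Scope ring_scope.


Definition bf (R : realFieldType) (m n : nat) (u : 'cV[R]_m) (M : 'M[R]_(m, n)) (v : 'cV[R]_n) : R :=
  (u^T *m M *m v) 0 0.

Lemma bf_block (R : realFieldType) m1 m2 n1 n2 (u1 : 'cV[R]_m1) (u2 : 'cV[R]_m2) (v1 : 'cV[R]_n1) (v2 : 'cV[R]_n2)
  (A : 'M[R]_(m1,n1)) (B : 'M[R]_(m1,n2)) (C : 'M[R]_(m2,n1)) (D : 'M[R]_(m2,n2)) :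
  bf (col_mx u1 u2) (block_mx A B C D) (col_mx v1 v2) =
  bf u1 A v1 + bf u1 B v2 + bf u2 C v1 + bf u2 D v2.
Proof.
rewrite /bf tr_col_mx mul_row_block mul_row_col !mulmxDl !mxE; ring.
Qed.

Lemma bf_row (R : realFieldType) m n1 n2 (u : 'cV[R]_m) (v1 : 'cV[R]_n1) (v2 : 'cV[R]_n2) (B1 : 'M[R]_(m,n1)) (B2 : 'M[R]_(m,n2)) :
  bf u (row_mx B1 B2) (col_mx v1 v2) = bf u B1 v1 + bf u B2 v2.
Proof. by rewrite /bf -mulmxA mul_row_col mulmxDr !mulmxA mxE. Qed.

Lemma bf_col (R : realFieldType) m1 m2 n (u1 : 'cV[R]_m1) (u2 : 'cV[R]_m2) (v : 'cV[R]_n) (C1 : 'M[R]_(m1,n)) (C2 : 'M[R]_(m2,n)) :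
  bf (col_mx u1 u2) (col_mx C1 C2) v = bf u1 C1 v + bf u2 C2 v.
Proof. by rewrite /bf tr_col_mx mul_row_col mulmxDl mxE. Qed.

Lemma bf0 (R : realFieldType) m n (u : 'cV[R]_m) (v : 'cV[R]_n) : bf u 0 v = 0.
Proof. by rewrite /bf mulmx0 mul0mx mxE. Qed.

Lemma bf0l (R : realFieldType) m n (M : 'M[R]_(m,n)) (v : 'cV[R]_n) : bf 0 M v = 0.
Proof. by rewrite /bf trmx0 mul0mx mul0mx mxE. Qed.

Lemma bf_tr (R : realFieldType) m n (u : 'cV[R]_m) (M : 'M[R]_(n,m)) (v : 'cV[R]_n) : bf u M^T v = bf v M u.
Proof.
have h (A : 'M[R]_1) : A 0 0 = A^T 0 0 by rewrite mxE.
by rewrite /bf h !trmx_mul !trmxK mulmxA.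
Qed.

Lemma bfN (R : realFieldType) m n (u : 'cV[R]_m) (M : 'M[R]_(m,n)) (v : 'cV[R]_n) : bf u (- M) v = - bf u M v.
Proof. by rewrite /bf mulmxN mulNmx mxE. Qed.

Lemma bfZ (R : realFieldType) m n (u : 'cV[R]_m) k (M : 'M[R]_(m,n)) (v : 'cV[R]_n) : bf u (k *: M) v = k * bf u M v.
Proof. by rewrite /bf -scalemxAr -scalemxAl mxE. Qed.

Lemma bfDm (R : realFieldType) m n (u : 'cV[R]_m) (M1 M2 : 'M[R]_(m,n)) (v : 'cV[R]_n) : bf u (M1 + M2) v = bf u M1 v + bf u M2 v.
Proof. by rewrite /bf mulmxDr mulmxDl mxE. Qed.

Lemma bfBm (R : realFieldType) m n (u : 'cV[R]_m) (M1 M2 : 'M[R]_(m,n)) (v : 'cV[R]_n) : bf u (M1 - M2) v = bf u M1 v - bf u M2 v.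
Proof. by rewrite bfDm bfN. Qed.

Lemma bfDr (R : realFieldType) m n (u : 'cV[R]_m) (M : 'M[R]_(m,n)) (v1 v2 : 'cV[R]_n) : bf u M (v1 + v2) = bf u M v1 + bf u M v2.
Proof. by rewrite /bf mulmxDr mxE. Qed.

Lemma bfZr (R : realFieldType) m n (u : 'cV[R]_m) (M : 'M[R]_(m,n)) k (v : 'cV[R]_n) : bf u M (k *: v) = k * bf u M v.
Proof. by rewrite /bf -scalemxAr mxE. Qed.

Lemma bfZl (R : realFieldType) m n (u : 'cV[R]_m) (M : 'M[R]_(m,n)) k (v : 'cV[R]_n) : bf (k *: u) M v = k * bf u M v.
Proof. by rewrite -{1}(trmxK M) bf_tr bfZr bf_tr. Qed.

Lemma bf_mul (R : realFieldType) m n p (u : 'cV[R]_m) (M : 'M[R]_(m,n)) (N : 'M[R]_(n,p)) v :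
  bf u M (N *m v) = bf u (M *m N) v.
Proof. by rewrite /bf !mulmxA. Qed.

Lemma bf_scal (R : realFieldType) n (u v : 'cV[R]_n) k : bf u k%:M v = k * bf u 1%:M v.
Proof. by rewrite -[in LHS]scalemx1 bfZ. Qed.

Lemma sqnormE (R : realFieldType) n (v : 'cV[R]_n) : sqnorm v = bf v 1%:M v.
Proof.
rewrite /bf /sqnorm mulmx1 mxE; apply: eq_bigr => i _; by rewrite mxE expr2.
Qed.

Lemma sqnorm_ge0 (R : realFieldType) n (v : 'cV[R]_n) : 0 <= sqnorm v.
Proof. apply: sumr_ge0 => i _; exact: sqr_ge0. Qed.

Lemma sqnorm_eq0 (R : realFieldType) n (v : 'cV[R]_n) : sqnorm v = 0 -> v = 0.
Proof.
move=> h; apply/matrixP => i j; rewrite (ord1 j) mxE.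
have := @psumr_eq0P _ _ _ (fun i => v i 0 ^+ 2) (fun i _ => sqr_ge0 (v i 0)) h i isT.
by move/eqP; rewrite sqrf_eq0 => /eqP.
Qed.

Lemma sqnorm0 (R : realFieldType) n : sqnorm (0 : 'cV[R]_n) = 0.
Proof. by rewrite /sqnorm big1 // => i _; rewrite mxE expr0n. Qed.

Lemma sqnorm2 (R : realFieldType) (v : 'cV[R]_2) : sqnorm v = v 0 0 ^+ 2 + v 1 0 ^+ 2.
Proof. rewrite /sqnorm big_ord_recr big_ord1 /=. by congr (_ + _); congr (v _ _ ^+ 2); apply: val_inj. Qed.

Lemma posdef_ge0 (R : realFieldType) n (P : 'M[R]_n) v : posdef P -> 0 <= bf v P v.
Proof.
move=> [_ hP]; case: (eqVneq v 0) => [->|nz]; first by rewrite bf0l.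
exact: ltW (hP v nz).
Qed.

Lemma negdef_le0 (R : realFieldType) n (P : 'M[R]_n) v : negdef P -> bf v P v <= 0.
Proof.
move=> [_ hP]; case: (eqVneq v 0) => [->|nz]; first by rewrite bf0l.
exact: ltW (hP v nz).
Qed.

Lemma posdef_unit (R : realFieldType) n (P : 'M[R]_n) : posdef P -> P \in unitmx.
Proof.
move=> [hs hP]; rewrite unitmxE unitfE; apply/negP => /det0P [v nz hv].
have nz' : v^T != 0 by rewrite -(inj_eq (@trmx_inj _ _ _)) trmxK trmx0.
have := hP _ nz'; rewrite trmxK hv mul0mx mxE ltxx //.
Qed.


Lemma bf0r (R : realFieldType) m n (u : 'cV[R]_m) (M : 'M[R]_(m,n)) : bf u M 0 = 0.
Proof. by rewrite /bf mulmx0 mxE. Qed.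

Lemma step (R : realFieldType) (Theta mu1 mu2 mu3 : R) (P : 'M[R]_2) (Rv : 'cV[R]_2)
  (A : 'M[R]_2) (C : 'M[R]_(1,2)) (D : 'M[R]_(2,5)) (E : 'M[R]_(1,5))
  (hP : posdef P) (hmu3 : 0 < mu3) (hLMI : negdef (LMI Theta mu1 mu2 mu3 P Rv A C D E))
  (th : R) (hth : `|th| <= Theta) (e e1 x : 'cV[R]_2) (w : 'cV[R]_5)
  (he1 : P *m e1 = (P *m A - Rv *m C) *m e + P *m (DeltaA th *m x) + (P *m D - Rv *m E) *m w) :
  bf e1 P e1 - bf e P e + sqnorm e - mu1 * sqnorm x - mu2 * sqnorm w <= 0.
Proof.
set a := Theta^-1 *: (DeltaA th *m x).
have := negdef_le0 (col_mx a (col_mx e1 (col_mx e (col_mx x w)))) hLMI.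
rewrite /LMI /= !bf_block !bf_row !bf_col !bf0.
have [hPs _] := hP.
have hsym u v : bf u P v = bf v P u by rewrite -{1}hPs bf_tr.
set M := P *m A - Rv *m C; set N := P *m D - Rv *m E.
rewrite !bf_tr !bfN !bfZ (bf_scal _ _ mu3) (bf_scal _ _ (mu3 - mu1)) (bf_scal _ _ mu2) (bfBm e 1%:M P e) -!sqnormE [bf e1 P a]hsym !addr0 !add0r.
have hV1 : bf e1 P e1 = bf e1 M e + bf e1 P (DeltaA th *m x) + bf e1 N w.
  by rewrite -[P in LHS]mul1mx -bf_mul he1 !bfDr !bf_mul !mul1mx.
have ha : Theta * bf a P e1 = bf e1 P (DeltaA th *m x).
  rewrite /a bfZl hsym mulrA; case: (eqVneq Theta 0) => [h0|hn]; last by rewrite mulfV // mul1r.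
  have -> : DeltaA th = 0.
    apply/matrixP => i j; rewrite !mxE; case: ifP => // _.
    by apply/eqP; rewrite -normr_eq0 eq_le normr_ge0 -h0 hth.
  by rewrite mul0mx bf0r mulr0.
have hna : sqnorm a <= sqnorm x.
  rewrite /a !sqnorm2 !mxE !big_ord_recr !big_ord0 /= !mxE /=.
  have -> : widen_ord (leqnSn 1) ord_max = 0 :> 'I_2 by apply: val_inj.
  have -> : ord_max = 1 :> 'I_2 by apply: val_inj.
  rewrite !mul0r !add0r !addr0 mulr0 expr0n /= add0r mulrA.
  set c := Theta^-1 * th.
  have hc : c ^+ 2 <= 1.
    suff : `|c| <= 1.
      rewrite ler_norml => /andP [h1 h2].
      have : 0 <= (1 - c) * (1 + c) by apply: mulr_ge0; lra.
      rewrite expr2; lra.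
    rewrite /c; case: (eqVneq Theta 0) => [->|hn]; first by rewrite invr0 mul0r normr0.
    have hT : 0 < Theta by rewrite lt_def hn (le_trans (normr_ge0 _) hth).
    by rewrite normrM gtr0_norm ?invr_gt0 // ler_pdivrMl // mulr1.
  have h0 : 0 <= (1 - c ^+ 2) * x 0 0 ^+ 2 by apply: mulr_ge0; [lra|exact: sqr_ge0].
  have h1 := sqr_ge0 (x 1 0).
  rewrite exprMn; lra.
have h3 : 0 <= mu3 * (sqnorm x - sqnorm a) by apply: mulr_ge0; lra.
rewrite ha hV1; lra.
Qed.

Theorem theorem1 (R : realFieldType) (alpha Theta dt Q : R)
  (halpha : 0 < alpha <= 1) (hTheta : 0 <= Theta <= 1) (hdt : 0 < dt) (hQ : 0 < Q)
  (P : 'M[R]_2) (Rv : 'cV[R]_2) (mu1 mu2 mu3 : R)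
  (hP : posdef P) (hmu1 : 0 < mu1) (hmu2 : 0 < mu2) (hmu3 : 0 < mu3)
  (hLMI : negdef (LMI Theta mu1 mu2 mu3 P Rv (Amx alpha) (@Cmx R) (Dmx dt) (@Emx R))) :
  let L := invmx P *m Rv in
  exists gamma : 'cV[R]_2 -> 'cV[R]_2 -> R,
    (forall z1 z2 : 'cV[R]_2, inbox Q z1 -> inbox Q z2 ->
        0 <= gamma z1 z2 /\ (gamma z1 z2 = 0 <-> (z1 = 0 /\ z2 = 0))) /\
    forall (x xh : nat -> 'cV[R]_2) (f : nat -> 'cV[R]_4) (w : nat -> 'cV[R]_5)
           (theta : nat -> R),
      (forall t, `|theta t| <= Theta) ->
      (forall t, inbox Q (x t)) ->
      inbox Q (xh 0%N) ->
      (forall t, x t.+1 = (Amx alpha + DeltaA (theta t)) *m x t + Bmx dt *m f t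
                          + Dmx dt *m w t) ->
      (forall t, xh t.+1 = Amx alpha *m xh t + Bmx dt *m f t
                   + L *m ((@Cmx R *m x t + @Emx R *m w t) - @Cmx R *m xh t)) ->
      forall T : nat,
        \sum_(0 <= t < T.+1) sqnorm (x t - xh t)
        <= mu1 * \sum_(0 <= t < T.+1) sqnorm (x t)
           + mu2 * \sum_(0 <= t < T.+1) sqnorm (w t)
           + gamma (x 0%N) (xh 0%N).
Proof.
move=> L.
have hU := posdef_unit hP.
exists (fun z1 z2 => sqnorm z1 + sqnorm z2 + bf (z1 - z2) P (z1 - z2)).
split.
  move=> z1 z2 _ _.
  have h0 := sqnorm_ge0 z1; have h1 := sqnorm_ge0 z2; have h2 := posdef_ge0 (z1 - z2) hP.
  split; first lra.
  split.
    move=> h; split; apply: sqnorm_eq0; lra.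
  by case=> -> ->; rewrite subr0 bf0l !sqnorm0 !addr0.
move=> x xh f w theta hth hx hxh0 hxs hxhs T.
set V := fun t => bf (x t - xh t) P (x t - xh t).
have hstep t : V t.+1 - V t + sqnorm (x t - xh t) - mu1 * sqnorm (x t) - mu2 * sqnorm (w t) <= 0.
  apply: (step hP hmu3 hLMI (hth t)).
  rewrite hxs hxhs /L. do 3 rewrite ?mulmxDl ?mulmxBl ?mulmxDr ?mulmxBr ?mulmxN ?mulNmx ?mulmxA. rewrite (mulmxV hU) !mul1mx.
  apply/matrixP => i j; rewrite !mxE; ring.
have key n : \sum_(0 <= t < n) sqnorm (x t - xh t) + V n <=
   mu1 * \sum_(0 <= t < n) sqnorm (x t) + mu2 * \sum_(0 <= t < n) sqnorm (w t) + V 0%N.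
  elim: n => [|n IH]; first by rewrite !big_geq // !mulr0 !add0r.
  rewrite !big_nat_recr //= !mulrDr; have := hstep n; lra.
have := key T.+1; have := posdef_ge0 (x T.+1 - xh T.+1) hP.
have := sqnorm_ge0 (x 0%N); have := sqnorm_ge0 (xh 0%N); rewrite /V; lra.
Qed.
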